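(* Let $\mathbb{X},\mathbb{Y}$ be real Banach spaces of dimension greater than $1$. Then the pair $(\mathbb{X},\mathbb{Y})$ has the strong Bishop-Phelps-Bollobás property (sBPBp) if and only if for every $\epsilon>0$ and every nonzero $T\in\mathbb{L}(\mathbb{X},\mathbb{Y})$ there exists $\delta=\delta(\epsilon,T)$ with $0<\delta<\|T\|$ such that \[M_T(\delta)\subseteq\bigcup_{x\in M_T}\big(B(x,\epsilon)\cap S_{\mathbb{X}}\big).\]
   Context: The pair $(\mathbb{X},\mathbb{Y})$ has sBPBp if for every $\epsilon>0$ and every $T\in\mathbb{L}(\mathbb{X},\mathbb{Y})$ with $\|T\|=1$ there exists $\eta(\epsilon,T)>0$ such that whenever $x_0\in S_{\mathbb{X}}$ satisfies $\|Tx_0\|>1-\eta(\epsilon,T)$, there exists $x_1\in S_{\mathbb{X}}$ with $\|Tx_1\|=1$ and $\|x_1-x_0\|<\epsilon$. Here $M_T=\{x\in S_{\mathbb{X}}:\|Tx\|=\|T\|\}$, and for nonzero $T$ and $0<\delta<\|T\|$, $M_T(\delta)=\{x\in S_{\mathbb{X}}:\|Tx\|>\|T\|-\delta\}$; $B(x,r)$ is the open ball of centre $x$ and radius $r$. *)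

(* Defs.v *)
From HB Require Import structures.
From mathcomp Require Import all_boot all_order all_algebra.
From mathcomp Require Import all_classical all_reals all_analysis.
Set Implicit Arguments. Unset Strict Implicit. Unset Printing Implicit Defensive.
Import Order.TTheory GRing.Theory Num.Theory.
Import numFieldNormedType.Exports.
Local Open Scope classical_set_scope.
Local Open Scope ring_scope.

Section BPB.
Variables (R : realType) (X Y : normedModType R).

Definition sphere : set X := [set x | `|x| = 1].

Definition opnorm (T : X -> Y) : R := sup [set `|T x| | x in [set x : X | `|x| <= 1]].

Definition bounded_op (T : {linear X -> Y}) : Prop := continuous T.

Definition MT (T : X -> Y) : set X := [set x | `|x| = 1 /\ `|T x| = opnorm T].

Definition MTd (T : X -> Y) (d : R) : set X :=
  [set x | `|x| = 1 /\ opnorm T - d < `|T x|].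

Definition sBPBp : Prop :=
  forall (e : R), 0 < e ->
  forall T : {linear X -> Y}, bounded_op T -> opnorm T = 1 ->
  exists eta : R, 0 < eta /\
    forall x0 : X, `|x0| = 1 -> 1 - eta < `|T x0| ->
      exists x1 : X, `|x1| = 1 /\ `|T x1| = 1 /\ `|x1 - x0| < e.

End BPB.

Definition dim_gt1 (R : realType) (X : normedModType R) : Prop :=
  exists u v : X, forall a b : R, a *: u + b *: v = 0 -> a = 0 /\ b = 0.

(* Main.v *)
Require Import Defs.
From HB Require Import structures.
From mathcomp Require Import all_boot all_order all_algebra.
From mathcomp Require Import all_classical all_reals all_analysis.
Import Order.TTheory GRing.Theory Num.Theory.
Import numFieldNormedType.Exports.
Local Open Scope classical_set_scope.
Local Open Scope ring_scope.

Set Implicit Arguments.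
Section Aux.
Variables (R : realType) (X Y : normedModType R).

Definition sclT (c : R) (T : {linear X -> Y}) := fun x => c *: T x.
Lemma sclT_lin c T : linear (sclT c T).
Proof. by move=> a x y; rewrite /sclT linearP scalerDr !scalerA mulrC. Qed.
HB.instance Definition _ c T := GRing.isLinear.Build R X Y _ (sclT c T) (sclT_lin c T).

Lemma bound_of_cont (T : {linear X -> Y}) : bounded_op T ->
  exists k : R, forall x, `|T x| <= k * `|x|.
Proof.
move=> /linear_bounded_continuous /linear_boundedP [M [_ HM]].
exists (`|M| + 1); apply: HM.
by apply: (le_lt_trans (ler_norm M)); rewrite ltrDl.
Qed.

Lemma opnorm_ne0 (T : X -> Y) :
  [set `|T x| | x in [set x : X | `|x| <= 1]] !=set0.
Proof. by exists `|T 0|; exists 0 => //=; rewrite normr0. Qed.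

Lemma opnorm_ge (T : {linear X -> Y}) : bounded_op T ->
  forall x, `|x| <= 1 -> `|T x| <= opnorm T.
Proof.
move=> /bound_of_cont [k Hk] x Hx; apply: ub_le_sup; last by exists x.
exists `|k|=> _ [y /= Hy <-].
apply: (le_trans (Hk y)); apply: (le_trans (ler_wpM2r (normr_ge0 _) (ler_norm k))).
by rewrite -[X in _ <= X]mulr1 ler_wpM2l.
Qed.

Lemma opnorm_le (T : X -> Y) (b : R) :
  (forall x, `|x| <= 1 -> `|T x| <= b) -> opnorm T <= b.
Proof.
move=> H; apply: ge_sup; first exact: opnorm_ne0.
by move=> _ [y /= Hy <-]; apply: H.
Qed.

Lemma opnorm_pos (T : {linear X -> Y}) : bounded_op T ->
  (T : X -> Y) != (fun=> 0) -> 0 < opnorm T.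
Proof.
move=> hb hT.
have [x Hx] : exists x, T x != 0.
  apply/not_existsP => H; move/eqP: hT; apply; apply/funext => x.
  by have /negP := H x; rewrite negbK => /eqP.
have x0 : x != 0 by apply: contraNneq Hx => ->; rewrite linear0.
have nx : 0 < `|x| by rewrite normr_gt0.
set u := `|x|^-1 *: x.
have nu : `|u| = 1 by rewrite /u normrZ normrV ?unitfE ?normr_eq0 // normr_id mulVf ?normr_eq0.
have Tu : `|T u| <= opnorm T by apply: opnorm_ge; rewrite ?nu.
apply: lt_le_trans Tu.
rewrite /u linearZ normrZ /= normrV ?unitfE ?normr_eq0 // normr_id.
by rewrite mulr_gt0 ?invr_gt0 // normr_gt0.
Qed.

End Aux.
Unset Implicit Arguments.

Theorem theorem2p4 (R : realType) (X Y : completeNormedModType R) :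
  dim_gt1 X -> dim_gt1 Y ->
  (sBPBp X Y <->
   forall (e : R), 0 < e ->
   forall T : {linear X -> Y}, bounded_op T -> (T : X -> Y) != (fun=> 0) ->
   exists d : R, 0 < d /\ d < opnorm T /\
     MTd T d `<=` \bigcup_(x in MT T) (ball x e `&` @sphere R X)).
Proof.
move=> _ _; split.
- move=> H e e0 T hb hT.
  set c := opnorm T.
  have c0 : 0 < c by exact: opnorm_pos.
  set S : {linear X -> Y} := @sclT R X Y c^-1 T.
  have SE x : `|S x| = c^-1 * `|T x|.
    by rewrite /S /= /sclT normrZ gtr0_norm ?invr_gt0.
  have hbS : bounded_op S.
    move=> x; exact: (@continuousZ _ _ _ (fun=> c^-1) T x (@cst_continuous _ _ _ x) (hb x)).
  have nS : opnorm S = 1.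
    apply/le_anti/andP; split.
      apply: opnorm_le => x Hx; rewrite SE ler_pdivrMl // mulr1.
      exact: opnorm_ge.
    rewrite leNgt; apply/negP => Hs.
    have : c <= c * opnorm S.
      apply: opnorm_le => x Hx.
      by have := opnorm_ge hbS x Hx; rewrite SE ler_pdivrMl //.
    by rewrite leNgt gtr_pMr // Hs.
  have [eta [eta0 Heta]] := H e e0 S hbS nS.
  set m := Num.min eta (1/2).
  have m0 : 0 < m by rewrite lt_min eta0 divr_gt0.
  have m1 : m < 1 by rewrite gt_min ltr_pdivrMr // mul1r ltr1n orbT.
  have meta : m <= eta by rewrite ge_min lexx.
  exists (c * m); split; first by rewrite mulr_gt0.
  split; first by rewrite gtr_pMr.
  move=> x0 [nx0 Hx0].
  have [x1 [n1 [S1 d1]]] : exists x1 : X, `|x1| = 1 /\ `|S x1| = 1 /\ `|x1 - x0| < e.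
    apply: Heta => //; rewrite SE.
    apply: (le_lt_trans (lerB (lexx 1) meta)).
    rewrite ltr_pdivlMl // mulrBr mulr1; exact: Hx0.
  exists x1.
    split => //; move: S1; rewrite SE => /(congr1 (fun t => c * t)).
    by rewrite mulrA mulfV ?gt_eqF // mul1r mulr1.
  by split => //; rewrite -ball_normE /=.
- move=> H e e0 T hb n1.
  have hT : (T : X -> Y) != (fun=> 0).
    apply/eqP => T0.
    have : opnorm T <= 0 by apply: opnorm_le => x _; rewrite T0 normr0.
    by rewrite n1 ler10.
  have [d [d0 [d1 Hd]]] := H e e0 T hb hT.
  exists d; split => // x0 nx0 Hx0.
  have [x1 [n11 Tx1] [bx1 _]] : (\bigcup_(x in MT T) (ball x e `&` @sphere R X)) x0.
    by apply: Hd; split => //; rewrite n1.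
  exists x1; split => //; split; first by rewrite Tx1.
  by move: bx1; rewrite -ball_normE.
Qed.
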